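(* Let $L$ be a Skolem-free first-order language, $T$ an $L$ theory and $\Gamma$ a set of $L$ formulas. Then $\mathrm{GSI}^\omega_\Gamma(\mathit{sk}^\exists(T))\sqsubseteq_L T+\mathrm{IND}(\Gamma)$, i.e. every $L$ formula provable in $\mathrm{GSI}^\omega_\Gamma(\mathit{sk}^\exists(T))$ is provable in $T+\mathrm{IND}(\Gamma)$.
   Context: Skolem symbols $\mathfrak{s}_{Qx\varphi}$: for each formula $Qx\varphi$ ($Q\in\{\forall,\exists\}$) a new function symbol of arity $|\mathrm{FV}(Qx\varphi)|$; $L$ is Skolem-free if it contains none of the Skolem symbols obtainable (iteratively) over $L$. $\mathit{sk}^\exists$/$\mathit{sk}^\forall$: $\mathit{sk}^Q$ fixes atoms, commutes with $\wedge,\vee$, $\mathit{sk}^Q(\neg A)=\neg\mathit{sk}^{\overline Q}(A)$, $\mathit{sk}^Q(QxA(x,\vec y))=\mathit{sk}^Q(A(\mathfrak{s}_{QxA}(\vec y),\vec y))$ with $\vec y$ exactly the free variables of $QxA$, $\mathit{sk}^Q(\overline QxA)=\overline Qx\,\mathit{sk}^Q(A)$; elementwise on theories. $I_x\varphi=\forall\vec z(\varphi(0,\vec z)\wedge\forall x(\varphi(x,\vec z)\to\varphi(s(x),\vec z))\to\forall x\varphi(x,\vec z))$, $\mathrm{IND}(\Gamma)=\{I_x\gamma:\gamma\in\Gamma\}$. $\Gamma\downarrow L'=\{\gamma(\vec x,t_1,\dots,t_n):\gamma(\vec x,z_1,\dots,z_n)\in\Gamma,\ t_i$ ground $L'$ terms$\}$;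 $\Delta^-$ = formulas of $\Delta$ with at most one free variable; $\mathrm{GSI}_\Gamma(T)=T+\mathit{sk}^\exists(\mathrm{IND}((\Gamma\downarrow L(T))^-))$, $\mathrm{GSI}^\omega_\Gamma(T)=\bigcup_i\mathrm{GSI}^i_\Gamma(T)$ ($i$-fold iterations). *)

(* Defs.v *)
From Stdlib Require List.
From mathcomp Require Import ssreflect ssrfun ssrbool eqtype ssrnat seq.

Set Implicit Arguments.
Unset Strict Implicit.
Unset Printing Implicit Defensive.

Inductive quant := Qall | Qex.

Definition qdual (Q : quant) := if Q is Qall then Qex else Qall.

Section Syntax.
(* The Skolem-free base language L: base function symbols F (with arities
   arF, containing the constant zero and unary succ) and predicate symbols Pr.
   The full language is L together with all Skolem symbols obtainable
   (iteratively) over L: a function symbol is either a base symbol or a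
   Skolem symbol  skol Q B  standing for  s_{Q x B}. *)
Variables (F Pr : Type).

Inductive term :=
  | var : nat -> term
  | app : fsym -> list term -> term
with fsym :=
  | base : F -> fsym
  | skol : quant -> formula -> fsym
with formula :=
  | Atom : Pr -> list term -> formula
  | Eq   : term -> term -> formula
  | Neg  : formula -> formula
  | And  : formula -> formula -> formula
  | Or   : formula -> formula -> formula
  | All  : formula -> formula            (* binds de Bruijn index 0 *)
  | Ex   : formula -> formula.

Definition quantf (Q : quant) (B : formula) :=
  if Q is Qall then All B else Ex B.

Definition Imp (A B : formula) := Or (Neg A) B.

Fixpoint tsubst (s : nat -> term) (t : term) : term :=
  match t with
  | var n => s n
  | app f ts => app f (map (tsubst s) ts)
  end.

Definition up (s : nat -> term) : nat -> term :=
  fun n => match n with 0 => var 0 | k.+1 => tsubst (fun i => var i.+1) (s k) end.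

Fixpoint fsubst (s : nat -> term) (A : formula) : formula :=
  match A with
  | Atom p ts => Atom p (map (tsubst s) ts)
  | Eq t u => Eq (tsubst s t) (tsubst s u)
  | Neg B => Neg (fsubst s B)
  | And B C => And (fsubst s B) (fsubst s C)
  | Or B C => Or (fsubst s B) (fsubst s C)
  | All B => All (fsubst (up s) B)
  | Ex B => Ex (fsubst (up s) B)
  end.

Definition shiftf := fsubst (fun i => var i.+1).

(* substitute t for index 0, and decrement the other indices *)
Definition inst (t : term) : nat -> term :=
  fun n => match n with 0 => t | k.+1 => var k end.

Fixpoint occt (n : nat) (t : term) : bool :=
  match t with
  | var m => m == n
  | app _ ts => has (occt n) ts
  end.

Fixpoint occf (n : nat) (A : formula) : bool :=
  match A with
  | Atom _ ts => has (occt n) ts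
  | Eq t u => occt n t || occt n u
  | Neg B => occf n B
  | And B C | Or B C => occf n B || occf n C
  | All B | Ex B => occf n.+1 B
  end.

(* an upper bound (strict) on the free variables *)
Fixpoint tbound (t : term) : nat :=
  match t with
  | var n => n.+1
  | app _ ts => foldr maxn 0 (map tbound ts)
  end.

Fixpoint fbound (A : formula) : nat :=
  match A with
  | Atom _ ts => foldr maxn 0 (map tbound ts)
  | Eq t u => maxn (tbound t) (tbound u)
  | Neg B => fbound B
  | And B C | Or B C => maxn (fbound B) (fbound C)
  | All B | Ex B => (fbound B).-1
  end.

(* FV(A), as the increasing list of its free variables *)
Definition fvs (A : formula) : seq nat := filter (fun i => occf i A) (iota 0 (fbound A)).

(* Skolemization sk^Q, with an accumulated substitution:
   skS Q s A = sk^Q (A[s]). *)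
Fixpoint skS (Q : quant) (s : nat -> term) (A : formula) : formula :=
  match A with
  | Atom p ts => Atom p (map (tsubst s) ts)
  | Eq t u => Eq (tsubst s t) (tsubst s u)
  | Neg B => Neg (skS (qdual Q) s B)
  | And B C => And (skS Q s B) (skS Q s C)
  | Or B C => Or (skS Q s B) (skS Q s C)
  | All B =>
      if Q is Qall then
        let B' := fsubst (up s) B in
        let sk := app (skol Qall B') (map var (fvs (All B'))) in
        skS Q (fun n => match n with 0 => sk | k.+1 => s k end) B
      else All (skS Q (up s) B)
  | Ex B =>
      if Q is Qex then
        let B' := fsubst (up s) B in
        let sk := app (skol Qex B') (map var (fvs (Ex B'))) in
        skS Q (fun n => match n with 0 => sk | k.+1 => s k end) B
      else Ex (skS Q (up s) B)
  end.

Definition sk (Q : quant) (A : formula) : formula := skS Q var A.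

Definition theory := formula -> Prop.

Definition sk_th (Q : quant) (T : theory) : theory :=
  fun A => exists2 B, T B & A = sk Q B.

Definition th_union (T U : theory) : theory := fun A => T A \/ U A.

Variables (arF : F -> nat) (arP : Pr -> nat) (zero succ : F).

Definition arity (f : fsym) : nat :=
  match f with
  | base g => arF g
  | skol Q B => size (fvs (quantf Q B))
  end.

Fixpoint termIn (P : fsym -> Prop) (t : term) : Prop :=
  match t with
  | var _ => True
  | app f ts => [/\ P f, size ts = arity f & foldr (fun u Q => termIn P u /\ Q) True ts]
  end.

Fixpoint formIn (P : fsym -> Prop) (A : formula) : Prop :=
  match A with
  | Atom p ts => size ts = arP p /\ foldr (fun u Q => termIn P u /\ Q) True ts
  | Eq t u => termIn P t /\ termIn P u
  | Neg B => formIn P B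
  | And B C | Or B C => formIn P B /\ formIn P C
  | All B | Ex B => formIn P B
  end.

Definition isBase (f : fsym) : Prop := exists g, f = base g.

Definition wf_term (t : term) := termIn (fun _ => True) t.

Definition Lformula (A : formula) : Prop := formIn isBase A.

Definition Ltheory (T : theory) : Prop := forall A, T A -> Lformula A.

Fixpoint symt (f : fsym) (t : term) : Prop :=
  match t with
  | var _ => False
  | app g ts => g = f \/ foldr (fun u Q => symt f u \/ Q) False ts
  end.

Fixpoint symf (f : fsym) (A : formula) : Prop :=
  match A with
  | Atom _ ts => foldr (fun u Q => symt f u \/ Q) False ts
  | Eq t u => symt f t \/ symt f u
  | Neg B => symf f B
  | And B C | Or B C => symf f B \/ symf f C
  | All B | Ex B => symf f B
  end.

Definition langOf (T : theory) : fsym -> Prop :=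
  fun f => isBase f \/ exists2 A, T A & symf f A.

Definition ground (t : term) : Prop := tbound t = 0.

Definition down (G : theory) (L' : fsym -> Prop) : theory :=
  fun A => exists g s, [/\ G g,
      (forall j, s j = var j \/ (ground (s j) /\ termIn L' (s j))) & A = fsubst s g].

Definition minus (D : theory) : theory := fun A => D A /\ size (fvs A) <= 1.

(* induction formula with induction variable index 0, parameters 1,2,...
   (universally closed) *)
Definition Ind0 (phi : formula) : formula :=
  let s0 := fun n => match n with 0 => app (base zero) [::] | k.+1 => var k end in
  let ss := fun n => match n with 0 => app (base succ) [:: var 0] | k.+1 => var k.+1 end in
  iter (fbound phi).-1 All
    (Imp (And (fsubst s0 phi) (All (Imp phi (fsubst ss phi)))) (All phi)).

Definition Ix (x : nat) (phi : formula) : formula :=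
  Ind0 (fsubst (fun j => if j == x then var 0 else var j.+1) phi).

Definition IND (G : theory) : theory := fun A => exists x g, G g /\ A = Ix x g.

Definition GSI (G T : theory) : theory :=
  th_union T (sk_th Qex (IND (minus (down G (langOf T))))).

Definition GSIomega (G T : theory) : theory :=
  fun A => exists i, iter i (GSI G) T A.

Inductive nd : seq formula -> formula -> Prop :=
  | nd_ax G A : List.In A G -> nd G A
  | nd_andI G A B : nd G A -> nd G B -> nd G (And A B)
  | nd_andE1 G A B : nd G (And A B) -> nd G A
  | nd_andE2 G A B : nd G (And A B) -> nd G B
  | nd_orI1 G A B : nd G A -> nd G (Or A B)
  | nd_orI2 G A B : nd G B -> nd G (Or A B)
  | nd_orE G A B C : nd G (Or A B) -> nd (A :: G) C -> nd (B :: G) C -> nd G C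
  | nd_negI G A B : nd (A :: G) B -> nd (A :: G) (Neg B) -> nd G (Neg A)
  | nd_raa G A B : nd (Neg A :: G) B -> nd (Neg A :: G) (Neg B) -> nd G A
  | nd_allI G A : nd (map shiftf G) A -> nd G (All A)
  | nd_allE G A t : wf_term t -> nd G (All A) -> nd G (fsubst (inst t) A)
  | nd_exI G A t : wf_term t -> nd G (fsubst (inst t) A) -> nd G (Ex A)
  | nd_exE G A B : nd G (Ex A) -> nd (A :: map shiftf G) (shiftf B) -> nd G B
  | nd_refl G t : wf_term t -> nd G (Eq t t)
  | nd_subst G A s t : nd G (Eq s t) -> nd G (fsubst (inst s) A) ->
                       nd G (fsubst (inst t) A).

Definition provable (T : theory) (A : formula) : Prop :=
  exists D : seq formula, (forall B, List.In B D -> T B) /\ nd D A.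

End Syntax.

(* Main.v *)
Require Import Defs.
From mathcomp Require Import ssreflect ssrfun ssrbool eqtype ssrnat seq choice.
From Stdlib Require Import FunctionalExtensionality PropExtensionality ClassicalEpsilon Classical.
Set Implicit Arguments. Unset Strict Implicit. Unset Printing Implicit Defensive.

Section Syn.
Variables (F Pr : Type).
Local Notation term := (term F Pr).
Local Notation formula := (formula F Pr).
Local Notation fsym := (Defs.fsym F Pr).
Local Notation var := (var F Pr).

Section Ind.
Variables (Pt : term -> Prop) (Ps : fsym -> Prop) (Pf : formula -> Prop).
Hypotheses (Hvar : forall n, Pt (var n))
  (Happ : forall f ts, Ps f -> List.Forall Pt ts -> Pt (app f ts))
  (Hbase : forall g, Ps (base Pr g))
  (Hskol : forall Q B, Pf B -> Ps (skol Q B))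
  (HAtom : forall p ts, List.Forall Pt ts -> Pf (Atom p ts))
  (HEq : forall t u, Pt t -> Pt u -> Pf (Eq t u))
  (HNeg : forall B, Pf B -> Pf (Neg B))
  (HAnd : forall B C, Pf B -> Pf C -> Pf (And B C))
  (HOr : forall B C, Pf B -> Pf C -> Pf (Or B C))
  (HAll : forall B, Pf B -> Pf (All B))
  (HEx : forall B, Pf B -> Pf (Ex B)).

Fixpoint tind (t : term) : Pt t :=
  match t with
  | Defs.var n => Hvar n
  | app f ts => Happ (sind f)
      ((fix go (l : seq term) : List.Forall Pt l :=
          match l with [::] => List.Forall_nil _ | u :: l' => List.Forall_cons _ (tind u) (go l') end) ts)
  end
with sind (f : fsym) : Ps f :=
  match f with base g => Hbase g | skol Q B => Hskol Q (find B) end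
with find (A : formula) : Pf A :=
  match A with
  | Atom p ts => HAtom p
      ((fix go (l : seq term) : List.Forall Pt l :=
          match l with [::] => List.Forall_nil _ | u :: l' => List.Forall_cons _ (tind u) (go l') end) ts)
  | Eq t u => HEq (tind t) (tind u)
  | Neg B => HNeg (find B)
  | And B C => HAnd (find B) (find C)
  | Or B C => HOr (find B) (find C)
  | All B => HAll (find B)
  | Ex B => HEx (find B)
  end.
End Ind.

Lemma term_ind2 (P : term -> Prop) :
  (forall n, P (var n)) -> (forall f ts, List.Forall P ts -> P (app f ts)) -> forall t, P t.
Proof.
move=> H1 H2; apply: (@tind P (fun _ => True) (fun _ => True)) => //; by move=> *; apply: H2.
Qed.

Lemma map_ext_in (A B : Type) (f g : A -> B) (s : seq A) :
  (forall x, List.In x s -> f x = g x) -> map f s = map g s.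
Proof. elim: s => //= x s IH H; rewrite H ?IH //; by [left | move=> y Hy; apply: H; right]. Qed.

Lemma map_ext_forall (A B : Type) (f g : A -> B) (s : seq A) :
  List.Forall (fun x => f x = g x) s -> map f s = map g s.
Proof. move=> H; apply: map_ext_in => x Hx; move/List.Forall_forall: H; apply. done. Qed.

Lemma In_map (A B : Type) (f : A -> B) (s : seq A) y :
  List.In y (map f s) <-> exists x, y = f x /\ List.In x s.
Proof.
elim: s y => [|x s IH] y /=; first by split=> [[]|[x [_ []]]].
split.
- case=> [<-|H]; first by exists x; split; [|left].
  by case: (proj1 (IH y) H) => z [-> Hz]; exists z; split; [|right].
- case=> z [-> [<-|Hz]]; first by left.
  by right; apply: (proj2 (IH _)); exists z.
Qed.

Lemma In_map2 (A B : Type) (f : A -> B) (s : seq A) x : List.In x s -> List.In (f x) (map f s).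
Proof. by move=> H; apply/In_map; exists x. Qed.

Definition shiftt := tsubst (fun i => var i.+1).
Definition comp (s t : nat -> term) := fun n => tsubst t (s n).

Lemma tsubst_comp t : forall s r, tsubst r (tsubst s t) = tsubst (comp s r) t.
Proof.
elim/term_ind2: t => //= f ts H s r.
rewrite -map_comp; congr app; apply: map_ext_forall; apply: List.Forall_impl H => u H; exact: H.
Qed.

Lemma up_comp s r : comp (up s) (up r) = up (comp s r).
Proof.
apply: functional_extensionality => -[|n] //=.
by rewrite /comp /= !tsubst_comp.
Qed.

Lemma fsubst_comp A : forall s r, fsubst r (fsubst s A) = fsubst (comp s r) A.
Proof.
elim: A => //=.
- move=> p ts s r; rewrite -map_comp; congr Atom; apply: map_ext_in => u _ /=; exact: tsubst_comp.
- by move=> t u s r; rewrite !tsubst_comp.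
- by move=> B IH s r; rewrite IH.
- by move=> B IH1 C IH2 s r; rewrite IH1 IH2.
- by move=> B IH1 C IH2 s r; rewrite IH1 IH2.
- by move=> B IH s r; rewrite IH up_comp.
- by move=> B IH s r; rewrite IH up_comp.
Qed.

Lemma tsubst_var t : tsubst var t = t.
Proof.
elim/term_ind2: t => //= f ts H.
congr app; rewrite -[RHS]map_id; apply: map_ext_forall; exact: H.
Qed.

Lemma up_var : up var = var.
Proof. by apply: functional_extensionality => -[|n]. Qed.

Lemma fsubst_var A : fsubst var A = A.
Proof.
elim: A => //=; try by (move=> *; rewrite ?up_var; congruence).
- move=> p ts; congr Atom; rewrite -[RHS]map_id; apply: map_ext_in => u _; exact: tsubst_var.
- by move=> t u; rewrite !tsubst_var.
Qed.

Lemma le_foldr_maxn (A : Type) (h : A -> nat) s x : List.In x s -> h x <= foldr maxn 0 (map h s).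
Proof.
elim: s => //= y s IH [<-|H]; first exact: leq_maxl.
exact: leq_trans (IH H) (leq_maxr _ _).
Qed.

Lemma foldr_maxn_le (A : Type) (h : A -> nat) s b :
  (forall x, List.In x s -> h x <= b) -> foldr maxn 0 (map h s) <= b.
Proof.
elim: s => //= y s IH H; rewrite geq_max H ?IH //; [by move=> x Hx; apply: H; right|by left].
Qed.

Lemma hasP' (A : Type) (p : pred A) s : has p s <-> exists x, List.In x s /\ p x.
Proof.
elim: s => /= [|y s IH]; first by split=> // -[x [[]]].
split.
- case/orP=> [H|/IH [x [H1 H2]]]; [by exists y; split; [left|]|by exists x; split; [right|]].
- case=> x [[<-|H1] H2]; apply/orP; [by left|right; apply/IH; by exists x].
Qed.

Lemma tsubst_ext (t : term) (s r : nat -> term) : (forall n, n < tbound t -> s n = r n) -> tsubst s t = tsubst r t.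
Proof.
elim/term_ind2: t => [n /= H|f ts IH H] /=; first by apply: H.
congr app; apply: map_ext_in => u Hu.
move/List.Forall_forall: IH => /(_ u Hu); apply => n Hn; apply: H.
exact: leq_trans Hn (le_foldr_maxn _ Hu).
Qed.

Lemma fsubst_ext (A : formula) : forall s r, (forall n, n < fbound A -> s n = r n) -> fsubst s A = fsubst r A.
Proof.
elim: A => /=.
- move=> p ts s r H; congr Atom; apply: map_ext_in => u Hu; apply: tsubst_ext => n Hn; apply: H.
  exact: leq_trans Hn (le_foldr_maxn _ Hu).
- move=> t u s r H; rewrite (@tsubst_ext t s r) ?(@tsubst_ext u s r) // => n Hn; apply: H;
  rewrite leq_max Hn ?orbT //.
- by move=> B IH s r H; rewrite (IH s r).
- move=> B IH1 C IH2 s r H; rewrite (IH1 s r) ?(IH2 s r) // => n Hn; apply: H; rewrite leq_max Hn ?orbT //.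
- move=> B IH1 C IH2 s r H; rewrite (IH1 s r) ?(IH2 s r) // => n Hn; apply: H; rewrite leq_max Hn ?orbT //.
- move=> B IH s r H; rewrite (IH (up s) (up r)) // => -[|n] Hn //=; rewrite H //.
  by move: Hn; case: (fbound B).
- move=> B IH s r H; rewrite (IH (up s) (up r)) // => -[|n] Hn //=; rewrite H //.
  by move: Hn; case: (fbound B).
Qed.

Lemma occt_bound n (t : term) : occt n t -> n < tbound t.
Proof.
elim/term_ind2: t => [m /= /eqP ->|f ts IH] //=.
case/hasP' => u [Hu Ho]; move/List.Forall_forall: IH => /(_ u Hu Ho) H.
exact: leq_trans H (le_foldr_maxn _ Hu).
Qed.

Lemma occf_bound (A : formula) : forall n, occf n A -> n < fbound A.
Proof.
elim: A => /=.
- move=> p ts n /hasP' [u [Hu /occt_bound H]]; exact: leq_trans H (le_foldr_maxn _ Hu).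
- by move=> t u n /orP [/occt_bound H|/occt_bound H]; rewrite leq_max H ?orbT.
- by [].
- by move=> B IH1 C IH2 n /orP [/IH1 H|/IH2 H]; rewrite leq_max H ?orbT.
- by move=> B IH1 C IH2 n /orP [/IH1 H|/IH2 H]; rewrite leq_max H ?orbT.
- by move=> B IH n /IH; case: (fbound B).
- by move=> B IH n /IH; case: (fbound B).
Qed.

Lemma tbound_subst (t : term) (s : nat -> term) b : (forall n, n < tbound t -> tbound (s n) <= b) -> tbound (tsubst s t) <= b.
Proof.
elim/term_ind2: t => [n /= H|f ts IH H] /=; first exact: H.
rewrite -map_comp; apply: foldr_maxn_le => u Hu /=.
move/List.Forall_forall: IH => /(_ u Hu); apply => n Hn; apply: H.
exact: leq_trans Hn (le_foldr_maxn _ Hu).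
Qed.

Lemma tbound_shift (t : term) : tbound (shiftt t) <= (tbound t).+1.
Proof. by apply: tbound_subst => n Hn /=. Qed.

Lemma fbound_subst (A : formula) : forall s b, (forall n, n < fbound A -> tbound (s n) <= b) -> fbound (fsubst s A) <= b.
Proof.
elim: A => /=.
- move=> p ts s b H; rewrite -map_comp; apply: foldr_maxn_le => u Hu /=; apply: tbound_subst => n Hn.
  apply: H; exact: leq_trans Hn (le_foldr_maxn _ Hu).
- move=> t u s b H; rewrite geq_max !tbound_subst // => n Hn; apply: H; rewrite leq_max Hn ?orbT //.
- by [].
- move=> B IH1 C IH2 s b H; rewrite geq_max IH1 ?IH2 // => n Hn; apply: H; rewrite leq_max Hn ?orbT //.
- move=> B IH1 C IH2 s b H; rewrite geq_max IH1 ?IH2 // => n Hn; apply: H; rewrite leq_max Hn ?orbT //.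
- move=> B IH s b H; rewrite -subn1 leq_subLR add1n; apply: IH => -[|n] Hn //=.
  apply: leq_trans (tbound_shift _) _; rewrite ltnS; apply: H; by move: Hn; case: (fbound B).
- move=> B IH s b H; rewrite -subn1 leq_subLR add1n; apply: IH => -[|n] Hn //=.
  apply: leq_trans (tbound_shift _) _; rewrite ltnS; apply: H; by move: Hn; case: (fbound B).
Qed.

Lemma foldrP (P : term -> Prop) (ts : seq term) :
  foldr (fun u Q => P u /\ Q) True ts <-> (forall u, List.In u ts -> P u).
Proof.
elim: ts => /= [|t ts IH]; first by split.
split=> [[H1 /IH H2] u [<-|Hu]|H]; [done|exact: H2|split; [apply: H; left|apply/IH => u Hu; apply: H; right]] => //.
Qed.

Lemma shift_up (s : nat -> term) (A : formula) : fsubst (up s) (shiftf A) = shiftf (fsubst s A).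
Proof. by rewrite /shiftf !fsubst_comp. Qed.

Lemma inst_up (s : nat -> term) (t : term) (A : formula) :
  fsubst s (fsubst (inst t) A) = fsubst (inst (tsubst s t)) (fsubst (up s) A).
Proof.
rewrite !fsubst_comp; congr fsubst; apply: functional_extensionality => -[|n] //=.
by rewrite /comp /= tsubst_comp tsubst_var.
Qed.

Lemma subst_shift_inst (t : term) (A : formula) : fsubst (inst t) (shiftf A) = A.
Proof. by rewrite /shiftf fsubst_comp fsubst_var. Qed.

Lemma tsubst_shift_inst (t u : term) : tsubst (inst t) (shiftt u) = u.
Proof. by rewrite /shiftt tsubst_comp tsubst_var. Qed.

Variable arF : F -> nat.
Local Notation nd := (@nd F Pr arF).
Local Notation wf := (@wf_term F Pr arF).

Lemma wf_subst t (s : nat -> term) : wf t -> (forall n, wf (s n)) -> wf (tsubst s t).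
Proof.
elim/term_ind2: t => [n|f ts IH] //= [_ Hs /foldrP Hts] Hsn; split=> //; first by rewrite size_map.
apply/foldrP => u /In_map [v [-> Hv]].
by move/List.Forall_forall: IH => /(_ v Hv (Hts v Hv)); apply.
Qed.

Lemma wf_up (s : nat -> term) : (forall n, wf (s n)) -> forall n, wf (up s n).
Proof. by move=> H [|n] //=; apply: wf_subst. Qed.

Definition incl (G G' : seq formula) := forall B, List.In B G -> List.In B G'.

Lemma incl_map (f : formula -> formula) G G' : incl G G' -> incl (map f G) (map f G').
Proof. by move=> H B /In_map [C [-> HC]]; apply: In_map2; apply: H. Qed.

Lemma incl_cons A G G' : incl G G' -> incl (A :: G) (A :: G').
Proof. by move=> H B [<-|HB]; [left|right; apply: H]. Qed.

Lemma nd_weak G A : nd G A -> forall G', incl G G' -> nd G' A.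
Proof.
elim=> {G A}.
- by move=> G A H G' HG; apply: nd_ax; apply: HG.
- by move=> *; apply: nd_andI; eauto.
- by move=> *; eapply nd_andE1; eauto.
- by move=> *; eapply nd_andE2; eauto.
- by move=> *; apply: nd_orI1; eauto.
- by move=> *; apply: nd_orI2; eauto.
- by move=> G A B C _ H1 _ H2 _ H3 G' HG; eapply nd_orE; [apply: H1|apply: H2; apply: incl_cons|apply: H3; apply: incl_cons].
- by move=> G A B _ H1 _ H2 G' HG; eapply nd_negI; [apply: H1|apply: H2]; apply: incl_cons.
- by move=> G A B _ H1 _ H2 G' HG; eapply nd_raa; [apply: H1|apply: H2]; apply: incl_cons.
- by move=> G A _ H G' HG; apply: nd_allI; apply: H; apply: incl_map.
- by move=> *; apply: nd_allE; eauto.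
- by move=> *; eapply nd_exI; eauto.
- by move=> G A B _ H1 _ H2 G' HG; eapply nd_exE; [apply: H1|apply: H2; apply: incl_cons; apply: incl_map].
- by move=> *; apply: nd_refl.
- by move=> *; eapply nd_subst; eauto.
Qed.

Lemma nd_subst_lemma G A : nd G A -> forall s, (forall n, wf (s n)) ->
  nd (map (fsubst s) G) (fsubst s A).
Proof.
elim=> {G A}.
- by move=> G A H s Hs; apply: nd_ax; apply: In_map2.
- by move=> *; apply: nd_andI; eauto.
- by move=> *; eapply nd_andE1; eauto.
- by move=> *; eapply nd_andE2; eauto.
- by move=> *; apply: nd_orI1; eauto.
- by move=> *; apply: nd_orI2; eauto.
- by move=> G A B C _ H1 _ H2 _ H3 s Hs; eapply nd_orE; [apply: H1|apply: (H2 s)|apply: (H3 s)].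
- by move=> G A B _ H1 _ H2 s Hs; eapply nd_negI; [apply: (H1 s)|apply: (H2 s)].
- by move=> G A B _ H1 _ H2 s Hs; eapply nd_raa; [apply: (H1 s)|apply: (H2 s)].
- move=> G A _ H s Hs /=; apply: nd_allI.
  have := H (up s) (wf_up Hs); rewrite -!map_comp.
  by rewrite (@eq_map _ _ _ (fun B => shiftf (fsubst s B))) // => B /=; rewrite shift_up.
- move=> G A t Ht _ H s Hs; rewrite inst_up; apply: nd_allE; [exact: wf_subst|exact: H].
- move=> G A t Ht _ H s Hs /=; apply: (nd_exI (t := tsubst s t)); first exact: wf_subst.
  by rewrite -inst_up; apply: H.
- move=> G A B _ H1 _ H2 s Hs; eapply nd_exE; first exact: (H1 s Hs).
  have := H2 (up s) (wf_up Hs); rewrite /= -!map_comp shift_up.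
  by rewrite (@eq_map _ _ _ (fun B => shiftf (fsubst s B))) // => C /=; rewrite shift_up.
- by move=> G t Ht s Hs /=; apply: nd_refl; apply: wf_subst.
- move=> G A u t _ H1 _ H2 s Hs; rewrite inst_up; eapply nd_subst; first exact: (H1 s Hs).
  by rewrite -inst_up; apply: H2.
Qed.

Lemma nd_incons G C X : nd G C -> nd G (Neg C) -> nd G X.
Proof.
move=> H1 H2; apply: (nd_raa (B := C)); apply: nd_weak; eauto => B HB; by right.
Qed.

Lemma nd_axh G A : nd (A :: G) A.
Proof. by apply: nd_ax; left. Qed.

Lemma nd_or_neg G A B : nd G (Or A B) -> nd G (Neg B) -> nd G A.
Proof.
move=> H1 H2; apply: nd_orE H1 _ _; first exact: nd_axh.
apply: (nd_incons (C := B)); first exact: nd_axh.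
by apply: (nd_weak H2) => C HC; right.
Qed.

Lemma nd_notall G A : nd G (Neg (All A)) -> nd G (Ex (Neg A)).
Proof.
move=> H; apply: (nd_raa (B := All A)); last by apply: (nd_weak H) => C HC; right.
apply: nd_allI => /=; apply: (nd_raa (B := shiftf (Ex (Neg A)))).
- apply: (nd_exI (t := var 0)) => //=.
  suff -> : fsubst (inst (var 0)) (fsubst (up (fun i => var i.+1)) A) = A by exact: nd_axh.
  rewrite fsubst_comp -[RHS]fsubst_var; congr fsubst; apply: functional_extensionality => -[|n] //.
- by apply: nd_ax; right; left.
Qed.

Lemma nd_eq_sym G s t : nd G (Eq s t) -> wf s -> nd G (Eq t s).
Proof.
move=> H Hs; have := @nd_subst _ _ _ G (Eq (var 0) (shiftt s)) s t H.
rewrite /= !tsubst_shift_inst; apply; exact: nd_refl.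
Qed.

Lemma nd_eq_trans G s t u : nd G (Eq s t) -> nd G (Eq t u) -> nd G (Eq s u).
Proof.
move=> H1 H2; have := @nd_subst _ _ _ G (Eq (shiftt s) (var 0)) t u H2.
by rewrite /= !tsubst_shift_inst; apply.
Qed.

Lemma map_shift_inst (t : term) l : map (tsubst (inst t)) (map shiftt l) = l.
Proof. by elim: l => //= u l ->; rewrite tsubst_shift_inst. Qed.

Lemma hole_map (pre post : seq term) t :
  map (tsubst (inst t)) (map shiftt pre ++ var 0 :: map shiftt post) = pre ++ t :: post.
Proof. by rewrite map_cat /= !map_shift_inst. Qed.

Lemma nd_cong_list G (Phi : seq term -> formula) :
  (forall pre post, exists A, forall t, fsubst (inst t) A = Phi (pre ++ t :: post)) ->
  forall ts us, List.Forall2 (fun t u => nd G (Eq t u)) ts us ->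
  forall pre, nd G (Phi (pre ++ ts)) -> nd G (Phi (pre ++ us)).
Proof.
move=> HPhi ts us; elim=> {ts us} // t u ts us Htu _ IH pre H.
have [A HA] := HPhi pre us.
have H1 : nd G (Phi (pre ++ t :: us)).
  have := IH (rcons pre t); rewrite !cat_rcons; apply; exact: H.
rewrite -HA; apply: nd_subst Htu _; by rewrite HA.
Qed.

Lemma nd_cong_atom G p ts us : List.Forall2 (fun t u => nd G (Eq t u)) ts us ->
  nd G (Atom p ts) -> nd G (Atom p us).
Proof.
move=> H; apply: (@nd_cong_list G (Atom p) _ _ _ H [::]) => pre post.
by exists (Atom p (map shiftt pre ++ var 0 :: map shiftt post)) => t /=; rewrite hole_map.
Qed.

Lemma nd_cong_app G f ts us : List.Forall2 (fun t u => nd G (Eq t u)) ts us ->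
  wf (app f ts) -> nd G (Eq (app f ts) (app f us)).
Proof.
move=> H Hw; apply: (@nd_cong_list G (fun l => Eq (app f ts) (app f l)) _ _ _ H [::]).
- move=> pre post; exists (Eq (shiftt (app f ts)) (app f (map shiftt pre ++ var 0 :: map shiftt post))).
  move=> t /=; congr Eq; [exact: (tsubst_shift_inst t (app f ts))|by rewrite hole_map].
- exact: nd_refl.
Qed.

Lemma forall_eq (A : Type) (P Q : A -> Prop) : (forall x, P x = Q x) -> (forall x, P x) = (forall x, Q x).
Proof. by move=> H; have -> : P = Q by apply: functional_extensionality. Qed.

Lemma exists_eq (A : Type) (P Q : A -> Prop) : (forall x, P x = Q x) -> (exists x, P x) = (exists x, Q x).
Proof. by move=> H; have -> : P = Q by apply: functional_extensionality. Qed.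

Section Sem.
Variables (D : Type) (eqv : D -> D -> Prop) (P : Pr -> seq D -> Prop).

Definition scons (d : D) (v : nat -> D) : nat -> D := fun n => match n with 0 => d | k.+1 => v k end.

Fixpoint evT (I : fsym -> seq D -> D) (v : nat -> D) (t : term) : D :=
  match t with Defs.var n => v n | app f ts => I f (map (evT I v) ts) end.

Fixpoint evF (I : fsym -> seq D -> D) (v : nat -> D) (A : formula) : Prop :=
  match A with
  | Atom p ts => P p (map (evT I v) ts)
  | Eq t u => eqv (evT I v t) (evT I v u)
  | Neg B => ~ evF I v B
  | And B C => evF I v B /\ evF I v C
  | Or B C => evF I v B \/ evF I v C
  | All B => forall d, evF I (scons d v) B
  | Ex B => exists d, evF I (scons d v) B
  end.

Variable I : fsym -> seq D -> D.

Lemma evT_subst t : forall v s, evT I v (tsubst s t) = evT I (fun n => evT I v (s n)) t.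
Proof.
elim/term_ind2: t => //= f ts IH v s; congr I; rewrite -map_comp; apply: map_ext_forall.
by apply: List.Forall_impl IH => u H; apply: H.
Qed.

Lemma scons_up v (s : nat -> term) d :
  (fun n => evT I (scons d v) (up s n)) = scons d (fun n => evT I v (s n)).
Proof. by apply: functional_extensionality => -[|n] //=; rewrite evT_subst. Qed.

Lemma evF_subst A : forall v s, evF I v (fsubst s A) = evF I (fun n => evT I v (s n)) A.
Proof.
elim: A => /=.
- by move=> p ts v s; rewrite -map_comp; congr P; apply: map_ext_in => u _ /=; rewrite evT_subst.
- by move=> t u v s; rewrite !evT_subst.
- by move=> B IH v s; rewrite IH.
- by move=> B IH1 C IH2 v s; rewrite IH1 IH2.
- by move=> B IH1 C IH2 v s; rewrite IH1 IH2.
- by move=> B IH v s; apply: forall_eq => d; rewrite IH scons_up.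
- by move=> B IH v s; apply: exists_eq => d; rewrite IH scons_up.
Qed.

Lemma evF_shift v d A : evF I (scons d v) (shiftf A) = evF I v A.
Proof. by rewrite /shiftf evF_subst. Qed.

Lemma evF_inst v t A : evF I v (fsubst (inst t) A) = evF I (scons (evT I v t) v) A.
Proof. rewrite evF_subst; congr evF; by apply: functional_extensionality => -[|n]. Qed.

Lemma evT_coinc t v w : (forall n, occt n t -> v n = w n) -> evT I v t = evT I w t.
Proof.
elim/term_ind2: t => [n /= H|f ts IH H] /=; first by apply: H; rewrite /= eqxx.
congr I; apply: map_ext_in => u Hu; move/List.Forall_forall: IH => /(_ u Hu); apply => n Hn.
by apply: H => /=; apply/hasP'; exists u.
Qed.

Lemma evF_coinc A : forall v w, (forall n, occf n A -> v n = w n) -> evF I v A = evF I w A.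
Proof.
elim: A => /=.
- move=> p ts v w H; congr P; apply: map_ext_in => u Hu; apply: evT_coinc => n Hn; apply: H.
  by apply/hasP'; exists u.
- by move=> t u v w H; rewrite (@evT_coinc t v w) ?(@evT_coinc u v w) // => n Hn; apply: H; rewrite Hn ?orbT.
- by move=> B IH v w H; rewrite (IH v w).
- by move=> B IH1 C IH2 v w H; rewrite (IH1 v w) ?(IH2 v w) // => n Hn; apply: H; rewrite Hn ?orbT.
- by move=> B IH1 C IH2 v w H; rewrite (IH1 v w) ?(IH2 v w) // => n Hn; apply: H; rewrite Hn ?orbT.
- move=> B IH v w H; apply: forall_eq => d; apply: IH => -[|n] //= Hn; exact: H.
- move=> B IH v w H; apply: exists_eq => d; apply: IH => -[|n] //= Hn; exact: H.
Qed.

Lemma evF_coinc_bound A v w : (forall n, n < fbound A -> v n = w n) -> evF I v A = evF I w A.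
Proof. by move=> H; apply: evF_coinc => n /occf_bound; apply: H. Qed.

Hypotheses (eqv_refl : forall d, eqv d d) (eqv_sym : forall d e, eqv d e -> eqv e d)
  (eqv_trans : forall d e f, eqv d e -> eqv e f -> eqv d f)
  (I_resp : forall f a b, List.Forall2 eqv a b -> eqv (I f a) (I f b))
  (P_resp : forall p a b, List.Forall2 eqv a b -> P p a -> P p b).

Lemma Forall2_map (A : Type) (h k : A -> D) s :
  List.Forall (fun x => eqv (h x) (k x)) s -> List.Forall2 eqv (map h s) (map k s).
Proof. by elim=> //= x l H1 _ H2; constructor. Qed.

Lemma evT_resp t v w : (forall n, eqv (v n) (w n)) -> eqv (evT I v t) (evT I w t).
Proof.
move=> H; elim/term_ind2: t => [n|f ts IH] //=; apply: I_resp; exact: Forall2_map.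
Qed.

Lemma evF_resp A : forall v w, (forall n, eqv (v n) (w n)) -> evF I v A -> evF I w A.
Proof.
have HS : forall v w d, (forall n, eqv (v n) (w n)) -> forall n, eqv (scons d v n) (scons d w n).
  by move=> v w d H [|n] //=.
elim: A => /=.
- move=> p ts v w H; apply: P_resp; apply: Forall2_map; apply/List.Forall_forall => u _.
  exact: evT_resp.
- move=> t u v w H Htu; apply: eqv_trans (evT_resp _ H); apply: eqv_trans Htu.
  by apply: eqv_sym; apply: evT_resp.
- move=> B IH v w H H1 H2; apply: H1; apply: IH H2 => n; apply: eqv_sym; exact: H.
- by move=> B IH1 C IH2 v w H [H1 H2]; split; [apply: IH1 H1|apply: IH2 H2].
- by move=> B IH1 C IH2 v w H [H1|H2]; [left; apply: IH1 H1|right; apply: IH2 H2].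
- by move=> B IH v w H H1 d; apply: IH (H1 d); apply: HS.
- by move=> B IH v w H [d H1]; exists d; apply: IH H1; apply: HS.
Qed.

Lemma soundness G A : nd G A -> forall v, (forall B, List.In B G -> evF I v B) -> evF I v A.
Proof.
elim=> {G A} /=.
- by move=> G A H v HG; apply: HG.
- by move=> G A B _ H1 _ H2 v HG; split; [apply: H1|apply: H2].
- by move=> G A B _ H v HG; case: (H v HG).
- by move=> G A B _ H v HG; case: (H v HG).
- by move=> G A B _ H v HG; left; apply: H.
- by move=> G A B _ H v HG; right; apply: H.
- move=> G A B C _ H1 _ H2 _ H3 v HG; case: (H1 v HG) => HA.
  + by apply: H2 => E [<-|HE] //; apply: HG.
  + by apply: H3 => E [<-|HE] //; apply: HG.
- move=> G A B _ H1 _ H2 v HG HA.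
  have HG' : forall E, List.In E (A :: G) -> evF I v E by move=> E [<-|HE] //; apply: HG.
  exact: (H2 v HG') (H1 v HG').
- move=> G A B _ H1 _ H2 v HG; apply: NNPP => HA.
  have HG' : forall E, List.In E (Neg A :: G) -> evF I v E by move=> E [<-|HE] //; apply: HG.
  exact: (H2 v HG') (H1 v HG').
- move=> G A _ H v HG d; apply: H => E /In_map [E' [-> HE]]; rewrite evF_shift; exact: HG.
- by move=> G A t _ _ H v HG; rewrite evF_inst; apply: H.
- by move=> G A t _ _ H v HG; exists (evT I v t); rewrite -evF_inst; apply: H.
- move=> G A B _ H1 _ H2 v HG; case: (H1 v HG) => d Hd.
  rewrite -(evF_shift v d); apply: H2 => E [<-|/In_map [E' [-> HE]]] //; rewrite evF_shift; exact: HG.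
- by move=> G t _ v HG.
- move=> G A s t _ H1 _ H2 v HG; rewrite evF_inst; move: (H2 v HG); rewrite evF_inst.
  apply: evF_resp => -[|n] //=; exact: H1.
Qed.

End Sem.

Section Skol.
Variables (D : Type) (eqv : D -> D -> Prop) (P : Pr -> seq D -> Prop) (Ib : F -> seq D -> D) (d0 : D).

Definition envv (Q : quant) (B : formula) (args : seq D) : nat -> D :=
  fun k => nth d0 args (index k (fvs (quantf Q B))).

Fixpoint skT (v : nat -> D) (t : term) : D :=
  match t with Defs.var n => v n | app f ts => skI f (map (skT v) ts) end
with skI (f : fsym) (args : seq D) : D :=
  match f with
  | base g => Ib g args
  | skol Q B => epsilon (inhabits d0)
      (fun d => if Q is Qex then skF (scons d (envv Q B args)) B else ~ skF (scons d (envv Q B args)) B)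
  end
with skF (v : nat -> D) (A : formula) : Prop :=
  match A with
  | Atom p ts => P p (map (skT v) ts)
  | Eq t u => eqv (skT v t) (skT v u)
  | Neg B => ~ skF v B
  | And B C => skF v B /\ skF v C
  | Or B C => skF v B \/ skF v C
  | All B => forall d, skF (scons d v) B
  | Ex B => exists d, skF (scons d v) B
  end.

Lemma evT_sk t : forall v, evT skI v t = skT v t.
Proof.
elim/term_ind2: t => //= f ts IH v; congr skI; apply: map_ext_forall.
by apply: List.Forall_impl IH => u H; apply: H.
Qed.

Lemma evF_sk A : forall v, evF eqv P skI v A = skF v A.
Proof.
elim: A => /=.
- by move=> p ts v; congr P; apply: map_ext_in => u _; rewrite evT_sk.
- by move=> t u v; rewrite !evT_sk.
- by move=> B IH v; rewrite IH.
- by move=> B IH1 C IH2 v; rewrite IH1 IH2.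
- by move=> B IH1 C IH2 v; rewrite IH1 IH2.
- by move=> B IH v; apply: forall_eq => d; rewrite IH.
- by move=> B IH v; apply: exists_eq => d; rewrite IH.
Qed.

Lemma fvs_mem (A : formula) k : (k \in fvs A) = occf k A.
Proof.
rewrite /fvs mem_filter mem_iota add0n /=; case H: (occf k A) => //=.
by rewrite (occf_bound H).
Qed.

Lemma occf_quantf Q (B : formula) k : occf k (quantf Q B) = occf k.+1 B.
Proof. by case: Q. Qed.

Lemma sk_witness Q (B : formula) v :
  evT skI v (app (skol Q B) (map var (fvs (quantf Q B)))) =
  epsilon (inhabits d0) (fun d => if Q is Qex then evF eqv P skI (scons d v) B
                                  else ~ evF eqv P skI (scons d v) B).
Proof.
rewrite /= -map_comp /=.
have E : forall d, skF (scons d (envv Q B (map v (fvs (quantf Q B))))) B = evF eqv P skI (scons d v) B.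
  move=> d; rewrite -evF_sk; apply: evF_coinc => -[|k] //= Hk.
  have Hm : k \in fvs (quantf Q B) by rewrite fvs_mem occf_quantf.
  by rewrite /envv (nth_map 0) ?index_mem // nth_index.
have -> : (fun d => if Q is Qex then skF (scons d (envv Q B (map v (fvs (quantf Q B))))) B
                  else ~ skF (scons d (envv Q B (map v (fvs (quantf Q B))))) B) =
          (fun d => if Q is Qex then evF eqv P skI (scons d v) B else ~ evF eqv P skI (scons d v) B).
  by apply: functional_extensionality => d; rewrite E.
done.
Qed.

Lemma skS_sound (A : formula) : forall s v,
  (evF eqv P skI v (fsubst s A) -> evF eqv P skI v (skS Qex s A)) /\
  (evF eqv P skI v (skS Qall s A) -> evF eqv P skI v (fsubst s A)).
Proof.
elim: A => //=.
- move=> B IH s v; case: (IH s v) => Ha Hb; split=> H1 H2; apply: H1; [exact: Hb H2|exact: Ha H2].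
- move=> B IH1 C IH2 s v; case: (IH1 s v) (IH2 s v) => H1 H2 [H3 H4].
  by split=> -[Ha Hb]; split; auto.
- move=> B IH1 C IH2 s v; case: (IH1 s v) (IH2 s v) => H1 H2 [H3 H4].
  by split=> -[Ha|Hb]; auto.
- move=> B IH s v; split.
  + by move=> H d; apply: (proj1 (IH _ _)); apply: H.
  + set B' := fsubst (up s) B; set c := app (skol Qall B') (map var (fvs (All B'))).
    move=> /(proj2 (IH _ _)); rewrite evF_subst => H d.
    have Hc : evT skI v c = epsilon (inhabits d0) (fun d => ~ evF eqv P skI (scons d v) B') by apply: (sk_witness Qall).
    have EB : forall e, evF eqv P skI (scons e v) B' = evF eqv P skI (scons e (fun n => evT skI v (s n))) B.
      by move=> e; rewrite /B' evF_subst scons_up.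
    rewrite -/B' EB; apply: NNPP => Hd.
    have Hsp := @epsilon_spec D (inhabits d0) (fun d => ~ evF eqv P skI (scons d v) B').
    rewrite -Hc EB in Hsp; apply: Hsp; first by exists d; rewrite EB.
    move: H; congr evF; by apply: functional_extensionality => -[|n].
- move=> B IH s v; split.
  + set B' := fsubst (up s) B; set c := app (skol Qex B') (map var (fvs (Ex B'))).
    case=> d Hd; apply: (proj1 (IH _ _)); rewrite evF_subst.
    have Hc : evT skI v c = epsilon (inhabits d0) (fun d => evF eqv P skI (scons d v) B') by apply: (sk_witness Qex).
    have EB : forall e, evF eqv P skI (scons e v) B' = evF eqv P skI (scons e (fun n => evT skI v (s n))) B.
      by move=> e; rewrite /B' evF_subst scons_up.
    have Hsp := @epsilon_spec D (inhabits d0) (fun d => evF eqv P skI (scons d v) B').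
    rewrite -Hc EB in Hsp; have := Hsp (ex_intro _ d Hd).
    congr evF; by apply: functional_extensionality => -[|n].
  + by case=> d Hd; exists d; apply: (proj2 (IH _ _)).
Qed.

End Skol.

Section SkResp.
Variables (D : Type) (eqv : D -> D -> Prop) (P : Pr -> seq D -> Prop) (Ib : F -> seq D -> D) (d0 : D).
Hypotheses (eqv_refl : forall d, eqv d d) (eqv_sym : forall d e, eqv d e -> eqv e d)
  (eqv_trans : forall d e f, eqv d e -> eqv e f -> eqv d f)
  (Ib_resp : forall g a b, List.Forall2 eqv a b -> eqv (Ib g a) (Ib g b))
  (P_resp : forall p a b, List.Forall2 eqv a b -> P p a -> P p b).

Lemma Forall2_nth a b i : List.Forall2 eqv a b -> eqv (nth d0 a i) (nth d0 b i).
Proof. by move=> H; elim: H i => [|x y a' b' Hxy _ IH] [|i] //=. Qed.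

Lemma Forall2_sym a b : List.Forall2 eqv a b -> List.Forall2 eqv b a.
Proof. by elim=> //= x y a' b' H _ IH; constructor; auto. Qed.

Local Notation skT := (skT eqv P Ib d0).
Local Notation skI := (skI eqv P Ib d0).
Local Notation skF := (skF eqv P Ib d0).

Lemma sk_resp_all :
  forall f, forall a b, List.Forall2 eqv a b -> eqv (skI f a) (skI f b).
Proof.
apply: (@sind (fun t => forall v w, (forall n, eqv (v n) (w n)) -> eqv (skT v t) (skT w t))
              (fun f => forall a b, List.Forall2 eqv a b -> eqv (skI f a) (skI f b))
              (fun A => forall v w, (forall n, eqv (v n) (w n)) -> (skF v A <-> skF w A))).
- by move=> n v w H /=.
- move=> f ts Hf Hts v w H /=; apply: Hf; apply: Forall2_map.
  by apply: List.Forall_impl Hts => u Hu; apply: Hu.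
- by move=> g a b H /=; apply: Ib_resp.
- move=> Q B IH a b H /=.
  have E : (fun d => if Q is Qex then skF (scons d (envv d0 Q B a)) B else ~ skF (scons d (envv d0 Q B a)) B) =
           (fun d => if Q is Qex then skF (scons d (envv d0 Q B b)) B else ~ skF (scons d (envv d0 Q B b)) B).
    apply: functional_extensionality => d.
    have HB : skF (scons d (envv d0 Q B a)) B <-> skF (scons d (envv d0 Q B b)) B.
      apply: IH => -[|n] //=; rewrite /envv; exact: Forall2_nth.
    by move: HB; case: Q => HB; apply: propositional_extensionality; tauto.
  by rewrite E.
- move=> p ts Hts v w H /=.
  have H2 : List.Forall2 eqv (map (skT v) ts) (map (skT w) ts).
    by apply: Forall2_map; apply: List.Forall_impl Hts => u Hu; apply: Hu.
  by split; apply: P_resp; [|apply: Forall2_sym].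
- move=> t u Ht Hu v w H /=; have := Ht v w H; have := Hu v w H => H1 H2.
  split=> H3; [apply: eqv_trans (H1); apply: eqv_trans H3; exact: eqv_sym|].
  apply: eqv_trans H2 _; apply: eqv_trans H3 _; exact: eqv_sym.
- by move=> B IH v w H /=; have := IH v w H; tauto.
- by move=> B C IH1 IH2 v w H /=; have := IH1 v w H; have := IH2 v w H; tauto.
- by move=> B C IH1 IH2 v w H /=; have := IH1 v w H; have := IH2 v w H; tauto.
- move=> B IH v w H /=; split=> H1 d; [apply/(IH (scons d v))|apply/(IH _ (scons d w))] => //;
  by move=> [|n] //=.
- move=> B IH v w H /=; split=> -[d H1]; exists d; [apply/(IH (scons d v))|apply/(IH _ (scons d w))] => //;
  by move=> [|n] //=.
Qed.

End SkResp.

Section IndSem.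
Variables (zero succ : F).
Definition s0f : nat -> term := fun n => match n with 0 => app (base Pr zero) [::] | k.+1 => var k end.
Definition ssf : nat -> term := fun n => match n with 0 => app (base Pr succ) [:: var 0] | k.+1 => var k.+1 end.
Definition psiI (phi : formula) := Imp (And (fsubst s0f phi) (All (Imp phi (fsubst ssf phi)))) (All phi).

Lemma Ind0_eq phi : Ind0 zero succ phi = iter (fbound phi).-1 (@All F Pr) (psiI phi).
Proof. by []. Qed.

Lemma psiI_bound phi : fbound (psiI phi) <= (fbound phi).-1.
Proof.
rewrite /psiI /Imp /= !geq_max leqnn andbT.
have H1 : fbound (fsubst s0f phi) <= (fbound phi).-1.
  apply: fbound_subst => -[|n] //= Hn; by move: Hn; case: (fbound phi).
have H2 : fbound (fsubst ssf phi) <= fbound phi.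
  apply: fbound_subst => -[|n] //= Hn; by move: Hn; case: (fbound phi).
rewrite H1 /= -!subn1 leq_sub2r // geq_max leqnn //.
Qed.

Variables (D : Type) (eqv : D -> D -> Prop) (P : Pr -> seq D -> Prop) (I : fsym -> seq D -> D).
Local Notation evF := (evF eqv P I).

Definition IndSem (Pd : D -> Prop) :=
  Pd (I (base Pr zero) [::]) -> (forall d, Pd d -> Pd (I (base Pr succ) [:: d])) -> forall d, Pd d.

Definition upd (v : nat -> D) x d := fun j => if j == x then d else v j.

Lemma psiI_sem phi w : evF w (psiI phi) <-> IndSem (fun d => evF (scons d w) phi).
Proof.
rewrite /psiI /Imp /IndSem /= evF_subst.
have -> : (fun n => evT I w (s0f n)) = scons (I (base Pr zero) [::]) w by apply: functional_extensionality => -[|n].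
have E : forall d, evF (scons d w) (fsubst ssf phi) = evF (scons (I (base Pr succ) [:: d]) w) phi.
  move=> d; rewrite evF_subst; congr evF; by apply: functional_extensionality => -[|n].
split.
- case=> [H H1 H2 d|H _ _ d]; last exact: H.
  exfalso; apply: H; split=> // e; rewrite E; case: (classic (evF (scons e w) phi)) => He; [right; exact: H2|by left].
- move=> H; case: (classic (forall d, evF (scons d w) phi)) => Hall; [by right|left; case=> H1 H2; apply: Hall].
  apply: H => // d Hd; case: (H2 d) => // ; by rewrite E.
Qed.

Lemma iter_All_sem1 m psi : forall v, evF v (iter m (@All F Pr) psi) ->
  forall w, evF (fun n => if n < m then w n else v (n - m)) psi.
Proof.
elim: m => [|m IH] v /=.
- by move=> H w; move: H; congr evF; apply: functional_extensionality => n; rewrite subn0.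
- move=> H w; have := IH _ (H (w m)) w; congr evF; apply: functional_extensionality => n.
  case: (ltngtP n m) => Hnm.
  + by rewrite (ltn_trans Hnm (ltnSn m)).
  + have -> : (n < m.+1) = false by rewrite ltnS leqNgt Hnm.
    by case E: (n - m) => [|k] /=; [move: E => /eqP; rewrite subn_eq0 leqNgt Hnm|rewrite subnS E].
  + by rewrite Hnm ltnSn subnn.
Qed.

Lemma iter_All_sem2 m psi : (forall w, evF w psi) -> forall v, evF v (iter m (@All F Pr) psi).
Proof. by move=> H; elim: m => [|m IH] v //= d. Qed.

Lemma Ind0_sem1 phi v : evF v (Ind0 zero succ phi) -> forall w, IndSem (fun d => evF (scons d w) phi).
Proof.
rewrite Ind0_eq => /iter_All_sem1 H w; apply/psiI_sem.
have := H w; rewrite (@evF_coinc_bound _ _ _ _ _ _ w) //.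
move=> n Hn; by rewrite (leq_trans Hn (psiI_bound phi)).
Qed.

Lemma Ind0_sem2 phi v : (forall w, IndSem (fun d => evF (scons d w) phi)) -> evF v (Ind0 zero succ phi).
Proof. by move=> H; rewrite Ind0_eq; apply: iter_All_sem2 => w; apply/psiI_sem. Qed.

Definition permx (x : nat) : nat -> term := fun j => if j == x then var 0 else var j.+1.

Lemma Ix_scons x g d w : evF (scons d w) (fsubst (permx x) g) = evF (upd w x d) g.
Proof.
rewrite evF_subst; congr evF; apply: functional_extensionality => j.
by rewrite /permx /upd; case: (j == x).
Qed.

Lemma Ix_sem1 x g v : evF v (Ix zero succ x g) -> forall w, IndSem (fun d => evF (upd w x d) g).
Proof.
move=> /Ind0_sem1 H w; have := H w.
have -> : (fun d => evF (scons d w) (fsubst (fun j => if j == x then var 0 else var j.+1) g)) =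
          (fun d => evF (upd w x d) g) by apply: functional_extensionality => d; rewrite -Ix_scons.
done.
Qed.

Lemma Ix_sem2 x g v : (forall w, IndSem (fun d => evF (upd w x d) g)) -> evF v (Ix zero succ x g).
Proof.
move=> H; apply: Ind0_sem2 => w.
have -> : (fun d => evF (scons d w) (fsubst (fun j => if j == x then var 0 else var j.+1) g)) =
          (fun d => evF (upd w x d) g) by apply: functional_extensionality => d; rewrite -Ix_scons.
exact: H.
Qed.

Lemma evT_ground (t : term) v w : ground t -> evT I v t = evT I w t.
Proof. by move=> Hg; apply: evT_coinc => n /occt_bound; rewrite /ground in Hg; rewrite Hg. Qed.

Lemma Ix_down x g (s : nat -> term) v : (forall j, s j = var j \/ ground (s j)) ->
  evF v (Ix zero succ x g) -> evF v (Ix zero succ x (fsubst s g)).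
Proof.
move=> Hs /Ix_sem1 H; apply: Ix_sem2 => w.
have E : forall d, evF (upd w x d) (fsubst s g) = evF (fun j => evT I (upd w x d) (s j)) g by move=> d; rewrite evF_subst.
case: (Hs x) => Hx.
- have E2 : forall d, (fun j => evT I (upd w x d) (s j)) = upd (fun j => evT I w (s j)) x d.
    move=> d; apply: functional_extensionality => j; rewrite /upd.
    case: eqP => [->|Hj]; first by rewrite Hx /= /upd eqxx.
    case: (Hs j) => [->|Hg] /=; first by rewrite /upd; case: eqP.
    exact: evT_ground.
  have := H (fun j => evT I w (s j)).
  have -> : (fun d => evF (upd w x d) (fsubst s g)) = (fun d => evF (upd (fun j => evT I w (s j)) x d) g).
    by apply: functional_extensionality => d; rewrite E E2.
  done.
- have E2 : forall d, (fun j => evT I (upd w x d) (s j)) = (fun j => evT I w (s j)).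
    move=> d; apply: functional_extensionality => j.
    case: (Hs j) => [Hj|Hg]; last exact: evT_ground.
    rewrite Hj /= /upd; case: eqP => // Ejx; move: Hx; rewrite -Ejx Hj /ground /=.
    done.
  move=> Hz _ d; move: Hz; rewrite !E !E2; done.
Qed.

End IndSem.

Section Origin.
Variables (zero succ : F) (T G : theory F Pr).

Lemma origin i B : iter i (GSI arF zero succ G) (sk_th Qex T) B ->
  (exists B0, T B0 /\ B = sk Qex B0) \/
  (exists x g (s : nat -> term), [/\ G g, (forall j, s j = var j \/ ground (s j)) &
                                     B = sk Qex (Ix zero succ x (fsubst s g))]).
Proof.
elim: i B => [|i IH] B /=.
- by case=> B0 HB0 ->; left; exists B0.
- case; first exact: IH.
  case=> B1 [x [g' [[[g [s [Hg Hs ->]]] _] ->]]] ->; right.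
  exists x, g, s; split=> // j; case: (Hs j) => [->|[H _]]; by [left|right].
Qed.

Variables (D : Type) (eqv : D -> D -> Prop) (P : Pr -> seq D -> Prop) (Ib : F -> seq D -> D) (d0 : D).
Local Notation skI := (skI eqv P Ib d0).
Local Notation evF := (evF eqv P skI).

Lemma sk_th_sem B0 v : evF v B0 -> evF v (sk Qex B0).
Proof. by move=> H; apply: (proj1 (skS_sound _ _ _ _ _ _ _)); rewrite fsubst_var. Qed.

Lemma origin_sem i B : iter i (GSI arF zero succ G) (sk_th Qex T) B ->
  exists E : formula, th_union T (IND zero succ G) E /\ forall v, evF v E -> evF v B.
Proof.
case/origin => [[B0 [HB0 ->]]|[x [g [s [Hg Hs ->]]]]].
- by exists B0; split; [left|move=> v; apply: sk_th_sem].
- exists (Ix zero succ x g); split; first by right; exists x, g.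
  by move=> v H; apply: sk_th_sem; apply: Ix_down.
Qed.
End Origin.

Lemma L_invariance (D : Type) (eqv : D -> D -> Prop) (P : Pr -> seq D -> Prop) (I1 I2 : fsym -> seq D -> D)
  (arP : Pr -> nat) :
  (forall g a, I1 (base Pr g) a = I2 (base Pr g) a) ->
  forall A, formIn arF arP (@isBase F Pr) A -> forall v, evF eqv P I1 v A = evF eqv P I2 v A.
Proof.
move=> HI.
have HT : forall t, termIn arF (@isBase F Pr) t -> forall v, evT I1 v t = evT I2 v t.
  elim/term_ind2 => [n|f ts IH] //= [[g ->] _ /foldrP Hts] v; rewrite HI; congr I2.
  apply: map_ext_in => u Hu; move/List.Forall_forall: IH => /(_ u Hu (Hts u Hu)); apply.
elim => /=.
- move=> p ts [_ /foldrP Hts] v; congr P; apply: map_ext_in => u Hu; exact: HT (Hts u Hu) v.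
- by move=> t u [Ht Hu] v; rewrite (HT t Ht) (HT u Hu).
- by move=> B IH H v; rewrite IH.
- by move=> B IH1 C IH2 [H1 H2] v; rewrite IH1 // IH2.
- by move=> B IH1 C IH2 [H1 H2] v; rewrite IH1 // IH2.
- by move=> B IH H v; apply: forall_eq => d; rewrite IH.
- by move=> B IH H v; apply: exists_eq => d; rewrite IH.
Qed.

Section Frag.
Variables (lf : seq F) (lp : seq Pr) (f0 : F).

Fixpoint fragT (t : term) : Prop :=
  match t with
  | Defs.var _ => True
  | app f ts => [/\ fragS f, size ts = arity arF f & foldr (fun u Q => fragT u /\ Q) True ts]
  end
with fragS (f : fsym) : Prop :=
  match f with base g => List.In g lf | skol _ B => fragF B end
with fragF (A : formula) : Prop :=
  match A with
  | Atom p ts => List.In p lp /\ foldr (fun u Q => fragT u /\ Q) True ts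
  | Eq t u => fragT t /\ fragT u
  | Neg B => fragF B
  | And B C | Or B C => fragF B /\ fragF C
  | All B | Ex B => fragF B
  end.

Lemma fragT_wf t : fragT t -> wf t.
Proof.
elim/term_ind2: t => [n|f ts IH] //= [_ Hs /foldrP Hts]; split=> //; apply/foldrP => u Hu.
by move/List.Forall_forall: IH => /(_ u Hu (Hts u Hu)).
Qed.

Lemma fragT_subst t (s : nat -> term) : fragT t -> (forall n, fragT (s n)) -> fragT (tsubst s t).
Proof.
elim/term_ind2: t => [n|f ts IH] //= [Hf Hs /foldrP Hts] Hsn; split=> //; first by rewrite size_map.
apply/foldrP => u /In_map [w [-> Hw]].
by move/List.Forall_forall: IH => /(_ w Hw (Hts w Hw)); apply.
Qed.

Lemma frag_up (s : nat -> term) : (forall n, fragT (s n)) -> forall n, fragT (up s n).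
Proof. by move=> H [|n] //=; apply: fragT_subst. Qed.

Lemma fragF_subst A : fragF A -> forall s, (forall n, fragT (s n)) -> fragF (fsubst s A).
Proof.
elim: A => /=.
- move=> p ts [Hp /foldrP Hts] s Hs; split=> //; apply/foldrP => u /In_map [w [-> Hw]].
  by apply: fragT_subst => //; apply: Hts.
- by move=> t u [Ht Hu] s Hs; split; apply: fragT_subst.
- by move=> B IH HB s Hs; apply: IH.
- by move=> B IH1 C IH2 [H1 H2] s Hs; split; [apply: IH1|apply: IH2].
- by move=> B IH1 C IH2 [H1 H2] s Hs; split; [apply: IH1|apply: IH2].
- by move=> B IH HB s Hs; apply: IH => //; apply: frag_up.
- by move=> B IH HB s Hs; apply: IH => //; apply: frag_up.
Qed.

Definition dflt : formula := Eq (var 0) (var 0).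

Fixpoint decT (x : GenTree.tree nat) : term :=
  match x with
  | GenTree.Leaf n => var n
  | GenTree.Node 0 (f :: ts) => app (decS f) (map decT ts)
  | _ => var 0
  end
with decS (x : GenTree.tree nat) : fsym :=
  match x with
  | GenTree.Node 1 [:: GenTree.Leaf i] => base Pr (nth f0 lf i)
  | GenTree.Node 2 [:: GenTree.Leaf q; b] => skol (if q is 0 then Qall else Qex) (decF b)
  | _ => base Pr f0
  end
with decF (x : GenTree.tree nat) : formula :=
  match x with
  | GenTree.Node 3 (GenTree.Leaf i :: ts) =>
      if nth None (map Some lp) i is Some p then Atom p (map decT ts) else dflt
  | GenTree.Node 4 [:: a; b] => Eq (decT a) (decT b)
  | GenTree.Node 5 [:: a] => Neg (decF a)
  | GenTree.Node 6 [:: a; b] => And (decF a) (decF b)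
  | GenTree.Node 7 [:: a; b] => Or (decF a) (decF b)
  | GenTree.Node 8 [:: a] => All (decF a)
  | GenTree.Node 9 [:: a] => Ex (decF a)
  | _ => dflt
  end.

Lemma nth_in_lf g : List.In g lf -> exists i, nth f0 lf i = g.
Proof.
elim: lf => //= h l IH [->|H]; first by exists 0.
by case: (IH H) => i Hi; exists i.+1.
Qed.

Lemma nth_in_lp p : List.In p lp -> exists i, nth None (map Some lp) i = Some p.
Proof.
elim: lp => //= h l IH [->|H]; first by exists 0.
by case: (IH H) => i Hi; exists i.+1.
Qed.

Lemma dec_list (ts : seq term) : List.Forall (fun t => fragT t -> exists x, decT x = t) ts ->
  (forall u, List.In u ts -> fragT u) -> exists xs, map decT xs = ts.
Proof.
elim=> [|t l Ht _ IH] H; first by exists [::].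
case: (Ht (H t (or_introl erefl))) => x Hx.
case: IH => [u Hu|xs Hxs]; first by apply: H; right.
by exists (x :: xs); rewrite /= Hx Hxs.
Qed.

Lemma dec_surj A : fragF A -> exists x, decF x = A.
Proof.
apply: (@find (fun t => fragT t -> exists x, decT x = t) (fun f => fragS f -> exists x, decS x = f)
              (fun A => fragF A -> exists x, decF x = A)).
- by move=> n _; exists (GenTree.Leaf n).
- move=> f ts Hf Hts /= [H1 _ /foldrP H3]; case: (Hf H1) => x Hx; case: (dec_list Hts H3) => xs Hxs.
  by exists (GenTree.Node 0 (x :: xs)); rewrite /= Hx Hxs.
- move=> g /= /nth_in_lf [i Hi]; by exists (GenTree.Node 1 [:: GenTree.Leaf i]); rewrite /= Hi.
- move=> Q B IH /= /IH [x Hx]; exists (GenTree.Node 2 [:: GenTree.Leaf (if Q is Qall then 0 else 1); x]).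
  by case: Q; rewrite /= Hx.
- move=> p ts Hts /= [/nth_in_lp [i Hi] /foldrP H3]; case: (dec_list Hts H3) => xs Hxs.
  by exists (GenTree.Node 3 (GenTree.Leaf i :: xs)); rewrite /= Hi Hxs.
- move=> t u Ht Hu /= [/Ht [x Hx] /Hu [y Hy]]; by exists (GenTree.Node 4 [:: x; y]); rewrite /= Hx Hy.
- move=> B IH /= /IH [x Hx]; by exists (GenTree.Node 5 [:: x]); rewrite /= Hx.
- move=> B C IH1 IH2 /= [/IH1 [x Hx] /IH2 [y Hy]]; by exists (GenTree.Node 6 [:: x; y]); rewrite /= Hx Hy.
- move=> B C IH1 IH2 /= [/IH1 [x Hx] /IH2 [y Hy]]; by exists (GenTree.Node 7 [:: x; y]); rewrite /= Hx Hy.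
- move=> B IH /= /IH [x Hx]; by exists (GenTree.Node 8 [:: x]); rewrite /= Hx.
- move=> B IH /= /IH [x Hx]; by exists (GenTree.Node 9 [:: x]); rewrite /= Hx.
Qed.

Definition enum (n : nat) : formula :=
  if @unpickle (GenTree.tree nat) n is Some x then decF x else dflt.

Lemma enum_surj A : fragF A -> exists n, enum n = A.
Proof. by case/dec_surj => x <-; exists (pickle x); rewrite /enum pickleK. Qed.

Definition consis (G : seq formula) := ~ exists C, nd G C /\ nd G (Neg C).
Definition bnd (G : seq formula) := foldr maxn 0 (map (@fbound F Pr) G).

Lemma henkin_consis (B : formula) G k : consis (Ex B :: G) -> bnd (Ex B :: G) <= k ->
  consis (fsubst (inst (var k)) B :: Ex B :: G).
Proof.
move=> Hc Hk [C [H1 H2]]; apply: Hc.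
pose sg : nat -> term := fun j : nat => if j == k then var 0 else var j.+1.
have Hsg : forall n, wf (sg n) by move=> n; rewrite /sg; case: (n == k).
have Hb : forall X, List.In X (Ex B :: G) -> fbound X <= k.
  by move=> X HX; apply: leq_trans Hk; apply: (le_foldr_maxn (@fbound F Pr) HX).
have EG : map (fsubst sg) (fsubst (inst (var k)) B :: Ex B :: G) = B :: map (@shiftf F Pr) (Ex B :: G).
  rewrite /=; congr cons.
  - rewrite fsubst_comp -[RHS]fsubst_var; apply: fsubst_ext => -[|n] Hn; first by rewrite /comp /= /sg eqxx.
    rewrite /comp /= /sg; case: eqP => // Enk; exfalso.
    have := Hb (Ex B) (or_introl erefl); rewrite /= -Enk; move: Hn; case: (fbound B) => // m.
    by rewrite ltnS /= => H1' H2'; have := leq_trans H1' H2'; rewrite ltnn.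
  - congr cons; last (apply: map_ext_in => X HX).
    + change (fsubst sg (Ex B) = fsubst (fun i => var i.+1) (Ex B)); apply: fsubst_ext => n Hn; rewrite /sg; case: eqP => // Enk; exfalso.
      by have := Hb (Ex B) (or_introl erefl); rewrite -Enk leqNgt Hn.
    + apply: fsubst_ext => n Hn; rewrite /sg; case: eqP => // Enk; exfalso.
      by have := Hb X (or_intror HX); rewrite -Enk leqNgt Hn.
have H1' := nd_subst_lemma H1 Hsg; have H2' := nd_subst_lemma H2 Hsg.
rewrite EG in H1' H2'.
exists (Ex B); split; first exact: nd_axh.
apply: (nd_exE (A := B)); first exact: nd_axh.
exact: nd_incons H1' H2'.
Qed.

Section Lind.
Variables (E : seq formula) (A : formula).

Fixpoint stage (n : nat) : seq formula :=
  match n with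
  | 0 => Neg A :: E
  | n'.+1 =>
      let G := stage n' in
      let phi := enum n' in
      if excluded_middle_informative (consis (phi :: G)) then
        (if phi is Ex B then fsubst (inst (var (bnd (phi :: G)))) B :: phi :: G else phi :: G)
      else G
  end.

Lemma stage_S1 n : consis (enum n :: stage n) ->
  stage n.+1 = (if enum n is Ex B then fsubst (inst (var (bnd (enum n :: stage n)))) B :: enum n :: stage n
                else enum n :: stage n).
Proof. by move=> H /=; destruct (excluded_middle_informative (consis (enum n :: stage n))). Qed.

Lemma stage_S2 n : ~ consis (enum n :: stage n) -> stage n.+1 = stage n.
Proof. by move=> H /=; destruct (excluded_middle_informative (consis (enum n :: stage n))). Qed.

Lemma stage_S1_in n : consis (enum n :: stage n) -> List.In (enum n) (stage n.+1).
Proof. by move/stage_S1 => ->; case: (enum n) => *; do ?[by left | right; left]. Qed.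

Lemma stage_step n : incl (stage n) (stage n.+1).
Proof.
move=> X HX; case: (classic (consis (enum n :: stage n))) => H; last by rewrite stage_S2.
by rewrite stage_S1 //; case: (enum n) => *; do ?right.
Qed.

Lemma stage_mono n m : n <= m -> incl (stage n) (stage m).
Proof.
move/subnK => <-; elim: (m - n) => [|k IH] //= X HX; apply: stage_step; exact: IH.
Qed.

Hypothesis cons0 : consis (stage 0).

Lemma stage_cons n : consis (stage n).
Proof.
elim: n => // n IH; case: (classic (consis (enum n :: stage n))) => H; last by rewrite stage_S2.
rewrite stage_S1 //; move: H; case: (enum n) => // B H; exact: henkin_consis.
Qed.

Definition Th X := exists n, nd (stage n) X.

Lemma Th2 X Y : Th X -> Th Y -> exists n, nd (stage n) X /\ nd (stage n) Y.
Proof.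
case=> n Hn [m Hm]; exists (maxn n m); split.
- by apply: (nd_weak Hn); apply: stage_mono; apply: leq_maxl.
- by apply: (nd_weak Hm); apply: stage_mono; apply: leq_maxr.
Qed.

Lemma Th_cons X : Th X -> Th (Neg X) -> False.
Proof. by move=> H1 H2; case: (Th2 H1 H2) => n [Ha Hb]; exact: (stage_cons (ex_intro _ X (conj Ha Hb))). Qed.

Lemma Th_max X : fragF X -> Th X \/ Th (Neg X).
Proof.
case/enum_surj => n <-.
case: (classic (consis (enum n :: stage n))) => Hc.
- by left; exists n.+1; apply: nd_ax; apply: stage_S1_in.
- right; exists n; apply: NNPP => Hn; apply: Hc => -[C [H1 H2]]; apply: Hn.
  exact: nd_negI H1 H2.
Qed.

Lemma Th_henkin B : fragF (Ex B) -> Th (Ex B) -> exists k, Th (fsubst (inst (var k)) B).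
Proof.
move=> Hf HB; case/enum_surj: (Hf) => n En.
case: (classic (consis (enum n :: stage n))) => Hc.
- exists (bnd (enum n :: stage n)); exists n.+1; apply: nd_ax; rewrite stage_S1 // En; by left.
- exfalso; apply: (Th_cons HB); exists n; rewrite -En; apply: NNPP => Hn; apply: Hc => -[C [H1 H2]]; apply: Hn.
  exact: nd_negI H1 H2.
Qed.

Lemma Th_nd1 X Y : Th X -> (forall G, nd G X -> nd G Y) -> Th Y.
Proof. by case=> n Hn H; exists n; apply: H. Qed.

Lemma Th_nd2 X Y Z : Th X -> Th Y -> (forall G, nd G X -> nd G Y -> nd G Z) -> Th Z.
Proof. by move=> H1 H2 H; case: (Th2 H1 H2) => n [Ha Hb]; exists n; apply: H. Qed.

Definition Dm := {t : term | fragT t}.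
Definition eqvm (d e : Dm) := Th (Eq (sval d) (sval e)).
Definition Pm p (a : seq Dm) := Th (Atom p (map sval a)).
Definition dvar n : Dm := exist _ (var n) I.

Lemma frag_app f (a : seq Dm) : fragS f -> size a = arity arF f -> fragT (app f (map sval a)).
Proof.
move=> Hf Hs /=; split=> //; first by rewrite size_map.
by apply/foldrP => u /In_map [d [-> _]]; exact: (proj2_sig d).
Qed.

Definition Im (f : fsym) (a : seq Dm) : Dm :=
  match excluded_middle_informative (fragS f /\ size a = arity arF f) with
  | left H => exist _ (app f (map sval a)) (frag_app (proj1 H) (proj2 H))
  | right _ => dvar 0
  end.

Lemma Im_val f a : fragS f -> size a = arity arF f -> sval (Im f a) = app f (map sval a).
Proof.
move=> H1 H2; rewrite /Im; destruct (excluded_middle_informative (fragS f /\ size a = arity arF f)) as [H|H] => //.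
by exfalso; apply: H.
Qed.

Lemma evT_term t : fragT t -> forall v, sval (evT Im v t) = tsubst (fun n => sval (v n)) t.
Proof.
elim/term_ind2: t => [n|f ts IH] //= [Hf Hs /foldrP Hts] v.
rewrite Im_val ?size_map // -map_comp; congr app; apply: map_ext_in => u Hu /=.
by move/List.Forall_forall: IH => /(_ u Hu (Hts u Hu)); apply.
Qed.

Lemma scons_sval (d : Dm) (v : nat -> Dm) (B : formula) :
  fsubst (fun n => sval (scons d v n)) B = fsubst (inst (sval d)) (fsubst (up (fun n => sval (v n))) B).
Proof.
rewrite fsubst_comp; congr fsubst; apply: functional_extensionality => -[|n] //=.
by rewrite /comp /= tsubst_shift_inst.
Qed.

Lemma Th_All B : fragF (All B) -> (forall d : Dm, Th (fsubst (inst (sval d)) B)) -> Th (All B).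
Proof.
move=> Hf H; case: (Th_max Hf) => // HN.
have HE : Th (Ex (Neg B)) by apply: Th_nd1 HN _ => G; apply: nd_notall.
case: (@Th_henkin (Neg B) Hf HE) => k Hk; exfalso; apply: (Th_cons (H (dvar k)) Hk).
Qed.

Lemma truth X : fragF X -> forall v, evF eqvm Pm Im v X <-> Th (fsubst (fun n => sval (v n)) X).
Proof.
elim: X => /=.
- move=> p ts [_ /foldrP Hts] v; rewrite /Pm -map_comp.
  by rewrite (@map_ext_in _ _ _ (tsubst (fun n => sval (v n)))) // => u Hu /=; apply: evT_term; apply: Hts.
- by move=> t u [Ht Hu] v; rewrite /eqvm !evT_term.
- move=> B IH HB v; rewrite IH //; have Hf := fragF_subst HB (fun n => proj2_sig (v n)).
  split=> [H|H H1]; last exact: Th_cons H1 H.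
  by case: (Th_max Hf).
- move=> B IH1 C IH2 [H1 H2] v; rewrite IH1 // IH2 //; split.
  + by case=> Ha Hb; apply: Th_nd2 Ha Hb _ => G; apply: nd_andI.
  + move=> H; split; apply: Th_nd1 H _ => G; [apply: nd_andE1|apply: nd_andE2].
- move=> B IH1 C IH2 [H1 H2] v; rewrite IH1 // IH2 //; split.
  + by case=> H; apply: Th_nd1 H _ => G; [apply: nd_orI1|apply: nd_orI2].
  + move=> H; case: (Th_max (fragF_subst H1 (fun n => proj2_sig (v n)))) => HB; first by left.
    right; apply: Th_nd2 H HB _ => G Ho Hn; apply: nd_orE Ho _ _; last exact: nd_axh.
    apply: (nd_incons (C := fsubst (fun n => sval (v n)) B)); first exact: nd_axh.
    by apply: (nd_weak Hn) => X HX; right.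
- move=> B IH HB v.
  have Hf : fragF (All (fsubst (up (fun n => sval (v n))) B)).
    exact: fragF_subst HB _ (frag_up (fun n => proj2_sig (v n))).
  split.
  + move=> H; apply: Th_All => // d; rewrite -scons_sval; apply/IH => //.
  + move=> H d; apply/IH => //; rewrite scons_sval; apply: Th_nd1 H _ => G H'.
    by apply: nd_allE => //; apply: fragT_wf; exact: (proj2_sig d).
- move=> B IH HB v.
  have Hf : fragF (Ex (fsubst (up (fun n => sval (v n))) B)).
    exact: fragF_subst HB _ (frag_up (fun n => proj2_sig (v n))).
  split.
  + case=> d /IH => /(_ HB); rewrite scons_sval => H; apply: Th_nd1 H _ => G H'.
    by apply: (nd_exI (t := sval d)) => //; apply: fragT_wf; exact: (proj2_sig d).
  + move=> H; case: (Th_henkin Hf H) => k Hk; exists (dvar k); apply/IH => //.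
    by rewrite scons_sval.
Qed.

Lemma eqvm_refl d : eqvm d d.
Proof. exists 0; apply: nd_refl; apply: fragT_wf; exact: (proj2_sig d). Qed.

Lemma eqvm_sym d e : eqvm d e -> eqvm e d.
Proof. move=> H; apply: Th_nd1 H _ => G H; apply: nd_eq_sym H _; apply: fragT_wf; exact: (proj2_sig d). Qed.

Lemma eqvm_trans d e f : eqvm d e -> eqvm e f -> eqvm d f.
Proof. move=> H1 H2; apply: Th_nd2 H1 H2 _ => G; apply: nd_eq_trans. Qed.

Lemma Th_Forall2 (a b : seq Dm) : List.Forall2 eqvm a b ->
  exists n, List.Forall2 (fun t u => nd (stage n) (Eq t u)) (map sval a) (map sval b).
Proof.
elim=> [|d e a' b' Hde _ [n Hn]]; first by exists 0.
case: Hde => m Hm; exists (maxn n m); constructor.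
- by apply: (nd_weak Hm); apply: stage_mono; apply: leq_maxr.
- apply: List.Forall2_impl Hn => t u H; apply: (nd_weak H); apply: stage_mono; apply: leq_maxl.
Qed.

Lemma Forall2_size (X Y : Type) (R : X -> Y -> Prop) a b : List.Forall2 R a b -> size a = size b.
Proof. by elim=> //= *; congr S. Qed.

Lemma Im_resp f a b : List.Forall2 eqvm a b -> eqvm (Im f a) (Im f b).
Proof.
move=> H; have Hs := Forall2_size H.
case: (classic (fragS f /\ size a = arity arF f)) => [[Hf Ha]|Hn].
- rewrite /eqvm !Im_val // -?Hs //.
  case: (Th_Forall2 H) => n Hn; exists n; apply: nd_cong_app => //.
  by apply: fragT_wf; apply: frag_app.
- rewrite /Im; destruct (excluded_middle_informative (fragS f /\ size a = arity arF f)) => //.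
  destruct (excluded_middle_informative (fragS f /\ size b = arity arF f)) as [[H1 H2]|]; last exact: eqvm_refl.
  by exfalso; apply: Hn; rewrite Hs.
Qed.

Lemma Pm_resp p a b : List.Forall2 eqvm a b -> Pm p a -> Pm p b.
Proof.
move=> H [m Hm]; case: (Th_Forall2 H) => n Hn; exists (maxn n m).
apply: nd_cong_atom; first by apply: List.Forall2_impl Hn => t u H'; apply: (nd_weak H'); apply: stage_mono; apply: leq_maxl.
by apply: (nd_weak Hm); apply: stage_mono; apply: leq_maxr.
Qed.

Lemma truth_var X : fragF X -> (evF eqvm Pm Im dvar X <-> Th X).
Proof. by move=> H; rewrite truth //; have -> : (fun n => sval (dvar n)) = var by []; rewrite fsubst_var. Qed.

End Lind.

End Frag.

Definition covers (Q : seq F -> seq Pr -> Prop) :=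
  exists lf lp, forall lf' lp', (forall g, List.In g lf -> List.In g lf') ->
                                (forall p, List.In p lp -> List.In p lp') -> Q lf' lp'.

Lemma covers_and Q1 Q2 : covers Q1 -> covers Q2 -> covers (fun a b => Q1 a b /\ Q2 a b).
Proof.
case=> [l1 [p1 H1]] [l2 [p2 H2]]; exists (l1 ++ l2), (p1 ++ p2) => lf' lp' Hf Hp.
split; [apply: H1|apply: H2] => x Hx; (apply: Hf || apply: Hp); apply: List.in_or_app; by [left|right].
Qed.

Lemma covers_list (X : Type) (Q : X -> seq F -> seq Pr -> Prop) (s : seq X) :
  (forall u, List.In u s -> covers (Q u)) -> covers (fun a b => forall u, List.In u s -> Q u a b).
Proof.
elim: s => [|x s IH] H; first by exists [::], [::] => *.
have := covers_and (H x (or_introl erefl)) (IH (fun u Hu => H u (or_intror Hu))).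
case=> lf [lp H2]; exists lf, lp => lf' lp' Hf Hp; case: (H2 lf' lp' Hf Hp) => Ha Hb u [<-|Hu] //.
exact: Hb.
Qed.

Lemma covers_mono (Q1 Q2 : seq F -> seq Pr -> Prop) : (forall a b, Q1 a b -> Q2 a b) -> covers Q1 -> covers Q2.
Proof. by move=> H [lf [lp H1]]; exists lf, lp => *; apply: H; apply: H1. Qed.

Lemma covers_T (arP : Pr -> nat) t : termIn arF (@isBase F Pr) t -> covers (fun a b => fragT a b t).
Proof.
elim/term_ind2: t => [n|f ts IH] /=; first by move=> _; exists [::], [::].
case=> [[g ->] Hs /foldrP Hts].
have Hl : covers (fun a b => forall u, List.In u ts -> fragT a b u).
  apply: covers_list => u Hu; move/List.Forall_forall: IH => /(_ u Hu); apply; exact: Hts.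
have Hg : covers (fun a b => List.In g a) by exists [:: g], [::] => lf' lp' Hf _; apply: Hf; left.
apply: covers_mono (covers_and Hg Hl) => a b [H1 H2]; split=> //; exact/foldrP.
Qed.

Lemma covers_F (arP : Pr -> nat) A : formIn arF arP (@isBase F Pr) A -> covers (fun a b => fragF a b A).
Proof.
elim: A => /=.
- move=> p ts [_ /foldrP Hts].
  have Hl : covers (fun a b => forall u, List.In u ts -> fragT a b u).
    by apply: covers_list => u Hu; apply: (covers_T arP); apply: Hts.
  have Hp : covers (fun a b => List.In p b) by exists [::], [:: p] => lf' lp' _ Hp; apply: Hp; left.
  apply: covers_mono (covers_and Hp Hl) => a b [H1 H2]; split=> //; exact/foldrP.
- by move=> t u [Ht Hu]; apply: covers_and; apply: (covers_T arP).
- by [].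
- by move=> B IH1 C IH2 [H1 H2]; apply: covers_and; [apply: IH1|apply: IH2].
- by move=> B IH1 C IH2 [H1 H2]; apply: covers_and; [apply: IH1|apply: IH2].
- by [].
- by [].
Qed.

Lemma termIn_subst (t : term) (s : nat -> term) : termIn arF (@isBase F Pr) t ->
  (forall n, termIn arF (@isBase F Pr) (s n)) -> termIn arF (@isBase F Pr) (tsubst s t).
Proof.
elim/term_ind2: t => [n|f ts IH] //= [Hf Hs /foldrP Hts] Hsn; split=> //; first by rewrite size_map.
apply/foldrP => u /In_map [w [-> Hw]].
by move/List.Forall_forall: IH => /(_ w Hw (Hts w Hw)); apply.
Qed.

Lemma formIn_subst (arP : Pr -> nat) A : formIn arF arP (@isBase F Pr) A -> forall s,
  (forall n, termIn arF (@isBase F Pr) (s n)) -> formIn arF arP (@isBase F Pr) (fsubst s A).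
Proof.
have Hup : forall s : nat -> term, (forall n, termIn arF (@isBase F Pr) (s n)) ->
             forall n, termIn arF (@isBase F Pr) (up s n).
  by move=> s H [|n] //=; apply: termIn_subst.
elim: A => /=.
- move=> p ts [Hp /foldrP Hts] s Hs; split; first by rewrite size_map.
  apply/foldrP => u /In_map [w [-> Hw]]; apply: termIn_subst => //; exact: Hts.
- by move=> t u [Ht Hu] s Hs; split; apply: termIn_subst.
- by move=> B IH HB s Hs; apply: IH.
- by move=> B IH1 C IH2 [H1 H2] s Hs; split; [apply: IH1|apply: IH2].
- by move=> B IH1 C IH2 [H1 H2] s Hs; split; [apply: IH1|apply: IH2].
- by move=> B IH HB s Hs; apply: IH => //; apply: Hup.
- by move=> B IH HB s Hs; apply: IH => //; apply: Hup.
Qed.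

Lemma Lformula_Ix (arP : Pr -> nat) (zero succ : F) x g : arF zero = 0 -> arF succ = 1 ->
  formIn arF arP (@isBase F Pr) g -> formIn arF arP (@isBase F Pr) (Ix zero succ x g).
Proof.
move=> Hz Hs Hg; rewrite /Ix Ind0_eq.
set phi := fsubst _ g.
have Hphi : formIn arF arP (@isBase F Pr) phi by apply: formIn_subst => // n; case: (n == x).
elim: (fbound phi).-1 => [|m IH] //=.
rewrite /psiI /Imp /=; split; [split; [|split]|] => //.
- apply: formIn_subst => // -[|n] //=; split; [by exists zero|by rewrite Hz|done].
- apply: formIn_subst => // -[|n] //=; split; [by exists succ|by rewrite Hs|done].
Qed.

End Syn.

Lemma origin_sem2 (F Pr : Type) (arF : F -> nat) (zero succ : F) (T G : theory F Pr) i (B : formula F Pr) :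
  iter i (GSI arF zero succ G) (sk_th Qex T) B ->
  exists E, th_union T (IND zero succ G) E /\
    forall (D : Type) (eqv : D -> D -> Prop) (P : Pr -> seq D -> Prop) (Ib : F -> seq D -> D) (d0 : D) v,
      evF eqv P (skI eqv P Ib d0) v E -> evF eqv P (skI eqv P Ib d0) v B.
Proof.
move=> Hi; case: (origin Hi) => [[B0 [HB0 ->]]|[x [g [s [Hg Hs ->]]]]].
- by exists B0; split; [left|move=> D eqv P Ib d0 v; apply: sk_th_sem].
- exists (Ix zero succ x g); split; first by right; exists x, g.
  by move=> D eqv P Ib d0 v H; apply: sk_th_sem; apply: Ix_down.
Qed.

Lemma collect (F Pr : Type) (arF : F -> nat) (zero succ : F) (T G : theory F Pr) (Dl : seq (formula F Pr)) :
  (forall B, List.In B Dl -> GSIomega arF zero succ G (sk_th Qex T) B) ->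
  exists E : seq (formula F Pr), (forall e, List.In e E -> th_union T (IND zero succ G) e) /\
    forall (D : Type) (eqv : D -> D -> Prop) (P : Pr -> seq D -> Prop) (Ib : F -> seq D -> D) (d0 : D) v,
      (forall e, List.In e E -> evF eqv P (skI eqv P Ib d0) v e) ->
      forall B, List.In B Dl -> evF eqv P (skI eqv P Ib d0) v B.
Proof.
elim: Dl => [|B Dl IH] H; first by exists [::]; split.
case: IH => [C HC|E [HE1 HE2]]; first by apply: H; right.
case: (H B (or_introl erefl)) => i Hi; case: (origin_sem2 Hi) => e [He1 He2].
exists (e :: E); split; first by move=> e' [<-|He'] //; apply: HE1.
move=> D eqv P Ib d0 v Hall B' [<-|HB'].
- by apply: He2; apply: Hall; left.
- by apply: (HE2 D eqv P Ib d0 v) => // e' He'; apply: Hall; right.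
Qed.

Unset Implicit Arguments.
Set Strict Implicit.

Theorem proposition12 (F Pr : Type) (arF : F -> nat) (arP : Pr -> nat)
    (zero succ : F) (Hzero : arF zero = 0) (Hsucc : arF succ = 1)
    (T G : theory F Pr)
    (HT : Ltheory arF arP T) (HG : Ltheory arF arP G) :
  forall A : formula F Pr,
    Lformula arF arP A ->
    provable arF (GSIomega arF zero succ G (sk_th Qex T)) A ->
    provable arF (th_union T (IND zero succ G)) A.
Proof.
move=> A HA [Dl [HDl Hnd]].
case: (collect HDl) => E [HE Hsem].
exists E; split => //; apply: NNPP => Hn.
have HEL : forall e, List.In e E -> formIn arF arP (@isBase F Pr) e.
  move=> e /HE [/HT //|[x [g [Hg ->]]]]; apply: Lformula_Ix => //; exact: HG.
have Hcov : covers (fun a b => (forall e, List.In e E -> fragF arF a b e) /\ fragF arF a b A).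
  apply: covers_and; last exact: covers_F HA.
  by apply: covers_list => e He; apply: covers_F (HEL e He).
case: Hcov => lf [lp Hcov]; case: (Hcov lf lp) => // HfE HfA.
have cons0 : consis arF (stage arF lf lp zero E A 0).
  move=> [C [H1 H2]]; apply: Hn; exact: nd_raa H1 H2.
pose D := Dm arF lf lp.
pose eqv := @eqvm F Pr arF lf lp zero E A.
pose P := @Pm F Pr arF lf lp zero E A.
pose Ib := fun g a => @Im F Pr arF lf lp (base Pr g) a.
pose d0 := dvar arF lf lp 0.
have Hr := @eqvm_refl _ _ arF lf lp zero E A.
have Hs : forall d e, eqv d e -> eqv e d by move=> d e; apply: eqvm_sym.
have Ht : forall d e f, eqv d e -> eqv e f -> eqv d f by move=> d e f; apply: eqvm_trans.
have HIb : forall g a b, List.Forall2 eqv a b -> eqv (Ib g a) (Ib g b) by move=> g a b; apply: Im_resp.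
have HP : forall p a b, List.Forall2 eqv a b -> P p a -> P p b by move=> p a b; apply: Pm_resp.
have HI := sk_resp_all d0 Hr Hs Ht HIb HP.
have Hinv : forall X, formIn arF arP (@isBase F Pr) X ->
    evF eqv P (skI eqv P Ib d0) (dvar arF lf lp) X = evF eqv P (@Im F Pr arF lf lp) (dvar arF lf lp) X.
  move=> X HX. have H0 : forall g a, skI eqv P Ib d0 (base Pr g) a = @Im F Pr arF lf lp (base Pr g) a by []. exact: (L_invariance eqv P H0 HX).
have HEv : forall e, List.In e E -> evF eqv P (skI eqv P Ib d0) (dvar arF lf lp) e.
  move=> e He; rewrite Hinv; last exact: HEL.
  apply/(truth_var cons0 (HfE e He)); exists 0; apply: nd_ax; by right.
have HA' := soundness Hr Hs Ht HI HP Hnd (Hsem D eqv P Ib d0 (dvar arF lf lp) HEv).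
rewrite Hinv // in HA'; move/(truth_var cons0 HfA): HA' => HA'.
apply: (Th_cons cons0 HA'); exists 0; apply: nd_ax; by left.
Qed.
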